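(* Let $q$ be a power of an odd prime, $q^n-1=ls$ with $l,s$ positive integers, $\gamma$ a primitive element of $\mathbb{F}_{q^n}$, $\xi=\gamma^s$, and $C_i=\gamma^i\{\gamma^{lj}:0\le j\le s-1\}$ for $0\le i\le l-1$. Let $r$ be a positive integer, $f\in\mathbb{F}_{q^n}[x]$, $A_i=f(\xi^{iq^r})$, and $S(x)=x^{q^r}f(x^{sq^r})$, so that $S(x)=A_ix^{q^r}$ for $x\in C_i$. Suppose $S$ is a scattered polynomial of index $t\in\{0,\dots,n-1\}$ over $\mathbb{F}_{q^n}$. If $y\in C_i$ and $z\in C_j$ ($0\le i,j\le l-1$) satisfy $S(y)/y^{q^t}=S(z)/z^{q^t}$, then $A_i=A_j$.
   Context: A polynomial (function) $S$ on $\mathbb{F}_{q^n}$ is a scattered polynomial of index $t$ over $\mathbb{F}_{q^n}$ if for all $y,z\in\mathbb{F}_{q^n}^*$, $\frac{S(y)}{y^{q^t}}=\frac{S(z)}{z^{q^t}}$ implies $y/z\in\mathbb{F}_q$. *)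

(* Defs.v *)
From HB Require Import structures.
From mathcomp Require Import all_boot all_order all_algebra all_field.
Set Implicit Arguments. Unset Strict Implicit. Unset Printing Implicit Defensive.
Import GRing.Theory.
Local Open Scope ring_scope.

Definition odd_prime_power (q : nat) : Prop :=
  exists p k : nat, [/\ prime p, odd p, (0 < k)%N & q = (p ^ k)%N].

Definition in_Fq (F : finFieldType) (q : nat) (x : F) : Prop := x ^+ q = x.

Definition scattered (F : finFieldType) (q t : nat) (S : F -> F) : Prop :=
  forall y z : F, y != 0 -> z != 0 ->
    S y / y ^+ (q ^ t) = S z / z ^+ (q ^ t) -> in_Fq q (y / z).

Definition cosetC (F : finFieldType) (gamma : F) (l s i : nat) : {set F} :=
  [set gamma ^+ i * gamma ^+ (l * j) | j : 'I_s].

(* Main.v *)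
Require Import Defs.
From HB Require Import structures.
From mathcomp Require Import all_boot all_order all_algebra all_field.
From mathcomp Require Import ring.
Import GRing.Theory.
Local Open Scope ring_scope.

Lemma frob_iter (F : finFieldType) (q : nat) (w : F) :
  w ^+ q = w -> forall k, w ^+ (q ^ k) = w.
Proof.
move=> Hw; elim=> [|k IH]; first by rewrite expn0 expr1.
by rewrite expnS exprM Hw IH.
Qed.

Lemma coset_pow (F : finFieldType) (gamma : F) (l s i m : nat) (y : F) :
  gamma ^+ (l * s) = 1 ->
  y \in cosetC gamma l s i -> y ^+ (s * m) = (gamma ^+ s) ^+ (i * m).
Proof.
move=> H1 /imsetP [j1 _ ->].
rewrite exprMn -!exprM.
have -> : (l * j1 * (s * m) = l * s * (j1 * m))%N.
  by rewrite !mulnA; congr (_ * _)%N; rewrite -!mulnA; congr (_ * _)%N; rewrite mulnC.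
rewrite (exprM gamma (l * s)) H1 expr1n mulr1.
by rewrite mulnCA.
Qed.

Lemma coset_nz (F : finFieldType) (gamma : F) (l s i : nat) (y : F) :
  (0 < l * s)%N -> gamma ^+ (l * s) = 1 -> y \in cosetC gamma l s i -> y != 0.
Proof.
move=> Hp H1 /imsetP [j1 _ ->].
have g0 : gamma != 0.
  apply/eqP => g0; move: H1; rewrite g0 expr0n.
  by rewrite gtn_eqF // => /eqP; rewrite eq_sym oner_eq0.
by rewrite mulf_neq0 // expf_neq0.
Qed.

Lemma key (F : finFieldType) (q r t : nat) (w z a b : F) :
  w != 0 -> z != 0 -> w ^+ q = w ->
  (w * z) ^+ (q ^ r) * a / (w * z) ^+ (q ^ t) = z ^+ (q ^ r) * b / z ^+ (q ^ t) ->
  a = b.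
Proof.
move=> w0 z0 Hw.
rewrite !exprMn !(frob_iter _ _ _ Hw).
have zr : z ^+ (q ^ r) != 0 by rewrite expf_neq0.
have zt : z ^+ (q ^ t) != 0 by rewrite expf_neq0.
move=> H.
have E : (w * z ^+ (q ^ r)) * a / (w * z ^+ (q ^ t)) = z ^+ (q ^ r) * a / z ^+ (q ^ t).
  by field; rewrite w0 zt.
rewrite E in H.
have := congr1 (fun u => u * z ^+ (q ^ t) / z ^+ (q ^ r)) H => /=.
have E2 : forall c, z ^+ (q ^ r) * c / z ^+ (q ^ t) * z ^+ (q ^ t) / z ^+ (q ^ r) = c.
  by move=> c; field; rewrite zr zt.
by rewrite !E2.
Qed.

Theorem mainTheorem3 (F : finFieldType) (q n l s r t : nat) (gamma : F)
    (f : {poly F}) (i j : nat) (y z : F) :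
  odd_prime_power q -> (0 < n)%N -> #|F| = (q ^ n)%N ->
  (q ^ n - 1)%N = (l * s)%N -> (0 < l)%N -> (0 < s)%N ->
  (q ^ n - 1)%N.-primitive_root gamma ->
  (0 < r)%N -> (t < n)%N ->
  let xi := gamma ^+ s in
  let A := fun k : nat => f.[xi ^+ (k * q ^ r)] in
  let S := fun x : F => x ^+ (q ^ r) * f.[x ^+ (s * q ^ r)] in
  scattered q t S ->
  (i < l)%N -> (j < l)%N ->
  y \in cosetC gamma l s i -> z \in cosetC gamma l s j ->
  S y / y ^+ (q ^ t) = S z / z ^+ (q ^ t) ->
  A i = A j.
Proof.
move=> _ _ _ Hls Hl Hs Hprim _ _ xi A S Hsc _ _ Hy Hz Heq.
have H1 : gamma ^+ (l * s) = 1 by rewrite -Hls; apply: prim_expr_order.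
have Hp : (0 < l * s)%N by rewrite muln_gt0 Hl Hs.
have y0 : y != 0 by apply: coset_nz Hp H1 Hy.
have z0 : z != 0 by apply: coset_nz Hp H1 Hz.
have Hw := Hsc y z y0 z0 Heq.
rewrite /in_Fq in Hw.
have Ew : y = (y / z) * z by rewrite divfK.
have Sy : S y = y ^+ (q ^ r) * A i by rewrite /S (coset_pow _ _ _ _ _ (q ^ r) _ H1 Hy).
have Sz : S z = z ^+ (q ^ r) * A j by rewrite /S (coset_pow _ _ _ _ _ (q ^ r) _ H1 Hz).
move: Heq; rewrite Sy Sz Ew; apply: key => //.
by rewrite mulf_neq0 // invr_eq0.
Qed.
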